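(* For all $(n,k)\in\mathcal{I}$ with $n\neq0$, writing $l=l_{n,k}$, $m=m_{n,k}$, $r=r_{n,k}$: (i) $M_{n,k}=L_{n,k}+R_{n,k}$; (ii) $\Sigma_{n,k}^{-1}=\big(h_m(l,m)\big)^{-1}+\big(h_m(m,r)\big)^{-1}$.
   Context: Let $d,m\geq 1$. Let $\alpha:[0,1]\to\mathbb{R}^{d\times d}$, $\sqrt{\Gamma}:[0,1]\to\mathbb{R}^{d\times m}$ be continuous, $\Gamma=\sqrt{\Gamma}\sqrt{\Gamma}^{T}$. Let $F(s,t)$ be the flow ($\partial_tF(s,t)=\alpha(t)F(s,t)$, $F(s,s)=I_d$), $h_u(s,t)=\int_s^t F(w,u)\Gamma(w)F(w,u)^Tdw$, $h=h_0$, $g(t)=F(0,t)$. Non-degeneracy: $F(u,v)h_u(u,v)F(u,v)^T$ is positive definite for all $0\le u<v\le1$ (this is the conditional covariance of $X_v$ given $X_u$ for the solution $X$ of $dX_t=\alpha X_tdt+\sqrt{\Gamma}dW_t$, $X_0=0$). $\mathcal{I}=\{(0,0)\}\cup\{(n,k):n\ge1,\ 0\le k<2^{n-1}\}$. Partition: fix $\rho\in(0,1)$ and reals $l_{n,k}<m_{n,k}<r_{n,k}$ ($n\ge1$) with $l_{1,0}=0$, $r_{1,0}=1$, $l_{n+1,2k}=l_{n,k}$, $r_{n+1,2k}=l_{n+1,2k+1}=m_{n,k}$, $r_{n+1,2k+1}=r_{n,k}$, $\max(r_{n,k}-m_{n,k},m_{n,k}-l_{n,k})<\rho(r_{n,k}-l_{n,k})$.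 For $n\ge1$: $\Sigma_{n,k}=h_m(l,m)h_m(l,r)^{-1}h_m(m,r)$; $\sigma_{n,k}$ is its lower-triangular Cholesky factor with positive diagonal ($\sigma_{n,k}\sigma_{n,k}^T=\Sigma_{n,k}$); $L_{n,k}=h(l,m)^{-1}g(m)^{-1}\sigma_{n,k}$, $R_{n,k}=h(m,r)^{-1}g(m)^{-1}\sigma_{n,k}$, $M_{n,k}=g(m)^T(\sigma_{n,k}^{-1})^T$. *)

(* Defs.v *)
From HB Require Import structures.
From mathcomp Require Import all_boot all_order all_algebra.
From mathcomp Require Import all_classical all_reals all_analysis.
Set Implicit Arguments. Unset Strict Implicit. Unset Printing Implicit Defensive.
Import Order.TTheory GRing.Theory Num.Theory.
Import numFieldNormedType.Exports.
Local Open Scope classical_set_scope.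
Local Open Scope ring_scope.

Definition Gam (R : realType) (d m : nat) (sG : R -> 'M[R]_(d, m)) (w : R)
  : 'M[R]_d := sG w *m (sG w)^T.

(* h_u(s,t) = \int_s^t F(w,u) Gamma(w) F(w,u)^T dw  (entrywise Lebesgue
   integral over [s,t]; only used with s < t) *)
Definition hmat (R : realType) (d m : nat) (F : R -> R -> 'M[R]_d)
  (sG : R -> 'M[R]_(d, m)) (u s t : R) : 'M[R]_d :=
  \matrix_(i < d, j < d)
    Rintegral lebesgue_measure `[s, t]
      (fun w => (F w u *m Gam sG w *m (F w u)^T) i j).

Definition posdef (R : realType) (d : nat) (A : 'M[R]_d) : Prop :=
  A^T = A /\ forall x : 'cV[R]_d, x != 0 -> 0 < (x^T *m A *m x) ord0 ord0.

Definition is_flow (R : realType) (d : nat) (alpha : R -> 'M[R]_d)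
  (F : R -> R -> 'M[R]_d) : Prop :=
  forall s : R, 0 <= s <= 1 ->
    F s s = 1%:M /\
    (forall i j, {within `[0, 1], continuous (fun t : R => F s t i j)}) /\
    (forall t : R, 0 < t < 1 -> forall i j,
       is_derive t 1 (fun t : R => F s t i j) ((alpha t *m F s t) i j)).

Definition is_cholesky (R : realType) (d : nat) (Sig sig : 'M[R]_d) : Prop :=
  (forall i j : 'I_d, (i < j)%N -> sig i j = 0) /\
  (forall i : 'I_d, 0 < sig i i) /\
  sig *m sig^T = Sig.

(* Main.v *)
Require Import Defs.
From HB Require Import structures.
From mathcomp Require Import all_boot all_order all_algebra.
From mathcomp Require Import all_classical all_reals all_analysis.
From mathcomp Require Import ring lra.
Import Order.TTheory GRing.Theory Num.Theory.
Import numFieldNormedType.Exports.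
Local Open Scope classical_set_scope.
Local Open Scope ring_scope.
Set Implicit Arguments. Unset Strict Implicit.

Definition cw (R : realType) (f : R -> R) := {within `[0, 1], continuous f}.

Lemma cwD (R : realType) (f g : R -> R) : cw f -> cw g -> cw (fun t => f t + g t).
Proof. by move=> hf hg x; apply: continuousD; [exact: hf|exact: hg]. Qed.
Lemma cwM (R : realType) (f g : R -> R) : cw f -> cw g -> cw (fun t => f t * g t).
Proof. by move=> hf hg x; apply: continuousM; [exact: hf|exact: hg]. Qed.
Lemma cwN (R : realType) (f : R -> R) : cw f -> cw (fun t => - f t).
Proof. by move=> hf x; apply: continuousN; exact: hf. Qed.
Lemma cw_cst (R : realType) (c : R) : cw (fun _ => c).
Proof. by apply: continuous_subspaceT; exact: cst_continuous. Qed.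
Lemma cw_glob (R : realType) (f : R -> R) : continuous f -> cw f.
Proof. exact: continuous_subspaceT. Qed.
Lemma cw_eq (R : realType) (f g : R -> R) : {in `[0, 1], f =1 g} -> cw f -> cw g.
Proof. move=> e; apply: subspace_eq_continuous => x hx; apply: e. by rewrite inE in hx. Qed.
Lemma cwV (R : realType) (f : R -> R) : (forall t, 0 <= t <= 1 -> f t != 0) -> cw f -> cw (fun t => (f t)^-1).
Proof.
move=> nz /subspace_continuousP hf; apply/subspace_continuousP => x hx.
apply: cvgV; last exact: hf.
by apply: nz; move: hx; rewrite /= in_itv.
Qed.
Lemma cw_norm (R : realType) (f : R -> R) : cw f -> cw (fun t => `|f t|).
Proof.
move=> /subspace_continuousP hf; apply/subspace_continuousP => x hx.
exact: cvg_norm (hf x hx).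
Qed.
Lemma cw_sum (R : realType) (I : Type) (s : seq I) (f : I -> R -> R) :
  (forall i, cw (f i)) -> cw (fun t => \sum_(i <- s) f i t).
Proof.
move=> hf; elim: s => [|a s IH].
  by apply: (@cw_eq R (fun _ => 0)); [move=> x _; rewrite big_nil|exact: cw_cst].
apply: (@cw_eq R (fun t => f a t + \sum_(i <- s) f i t)); last exact: cwD.
by move=> x _; rewrite big_cons.
Qed.

Lemma cw_prod (R : realType) (I : Type) (s : seq I) (f : I -> R -> R) :
  (forall i, cw (f i)) -> cw (fun t => \prod_(i <- s) f i t).
Proof.
move=> hf; elim: s => [|a s IH].
  by apply: (@cw_eq R (fun _ => 1)); [move=> x _; rewrite big_nil|exact: cw_cst].
apply: (@cw_eq R (fun t => f a t * \prod_(i <- s) f i t)); last exact: cwM.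
by move=> x _; rewrite big_cons.
Qed.

Definition mcont (R : realType) n p (M : R -> 'M[R]_(n, p)) :=
  forall i j, cw (fun t => M t i j).

Lemma mcont_mul (R : realType) n p q (A : R -> 'M[R]_(n, p)) (B : R -> 'M[R]_(p, q)) :
  mcont A -> mcont B -> mcont (fun t => A t *m B t).
Proof.
move=> hA hB i j.
apply: (@cw_eq R (fun t => \sum_(k < p) A t i k * B t k j)).
  by move=> x _; rewrite mxE.
by apply: cw_sum => k; apply: cwM.
Qed.

Lemma mcont_tr (R : realType) n p (A : R -> 'M[R]_(n, p)) :
  mcont A -> mcont (fun t => (A t)^T).
Proof. by move=> hA i j; apply: (@cw_eq R (fun t => A t j i)) => // x _; rewrite mxE. Qed.

Lemma mcont_cst (R : realType) n p (A : 'M[R]_(n, p)) : mcont (fun _ => A).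
Proof. by move=> i j; apply: cw_cst. Qed.

Lemma mcontB (R : realType) n p (A B : R -> 'M[R]_(n, p)) :
  mcont A -> mcont B -> mcont (fun t => A t - B t).
Proof.
move=> hA hB i j; apply: (@cw_eq R (fun t => A t i j + - B t i j)).
  by move=> x _; rewrite !mxE.
by apply: cwD => //; apply: cwN.
Qed.

Lemma cw_det (R : realType) n (A : R -> 'M[R]_n) : mcont A -> cw (fun t => \det (A t)).
Proof.
move=> hA; rewrite /determinant.
apply: cw_sum => s; apply: cwM; first exact: cw_cst.
by apply: cw_prod => i; apply: hA.
Qed.

Lemma mcont_inv (R : realType) n (A : R -> 'M[R]_n) :
  (forall t, 0 <= t <= 1 -> A t \in unitmx) -> mcont A -> mcont (fun t => invmx (A t)).
Proof.
move=> hu hA i j.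
apply: (@cw_eq R (fun t => (\det (A t))^-1 * ((-1) ^+ (j + i) *
   \det (row' j (col' i (A t)))))).
  move=> x; rewrite in_itv /= => hx.
  by rewrite /invmx hu // !mxE.
apply: cwM.
  apply: cwV; last exact: cw_det.
  by move=> t ht; have := hu t ht; rewrite unitmxE unitfE.
apply: cwM; first exact: cw_cst.
apply: cw_det => a b.
by apply: (@cw_eq R (fun t => A t (lift j a) (lift i b))) => // x _; rewrite !mxE.
Qed.

Lemma le_sum1 (R : realType) (I : finType) (F : I -> R) i :
  (forall j, 0 <= F j) -> F i <= \sum_j F j.
Proof. by move=> h; rewrite (bigD1 i) //= lerDl sumr_ge0. Qed.

Lemma bound_lemma (R : realType) d (a Dm : 'M[R]_d) K : 0 <= K ->
  (forall i k, `|a i k| <= K) ->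
  `| \sum_(i < d) \sum_(j < d) (Dm i j * (a *m Dm) i j + Dm i j * (a *m Dm) i j) |
   <= (d%:R * (d%:R * (d%:R * (2 * K)))) * \sum_(i < d) \sum_(j < d) Dm i j * Dm i j.
Proof.
move=> K0 hK.
set f := \sum_(i < d) \sum_(j < d) Dm i j * Dm i j.
have sq0 : forall x : R, 0 <= x * x by move=> x; rewrite -expr2 sqr_ge0.
have hsq : forall i j, Dm i j * Dm i j <= f.
  move=> i j; apply: (le_trans (@le_sum1 _ _ (fun j => Dm i j * Dm i j) j _)) => //.
  apply: (@le_sum1 _ _ (fun i => \sum_(j < d) Dm i j * Dm i j) i) => i'.
  exact: sumr_ge0.


have hf0 : 0 <= f by apply: sumr_ge0 => i _; apply: sumr_ge0.
have term : forall i j k, `|Dm i j * (a i k * Dm k j)| <= K * f.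
  move=> i j k; rewrite !normrM.
  have h1 := hsq i j; have h2 := hsq k j.
  have e1 : `|Dm i j| * `|Dm i j| = Dm i j * Dm i j by rewrite -normrM ger0_norm.
  have e2 : `|Dm k j| * `|Dm k j| = Dm k j * Dm k j by rewrite -normrM ger0_norm.
  have uv : `|Dm i j| * `|Dm k j| <= f.
    have n1 := normr_ge0 (Dm i j); have n2 := normr_ge0 (Dm k j).
    set u := `|Dm i j| in e1 n1 *; set v := `|Dm k j| in e2 n2 *.
    rewrite -e1 in h1; rewrite -e2 in h2.
    have := sqr_ge0 (u - v); rewrite sqrrB => hh.
    have : 2 * (u * v) <= 2 * f.
      rewrite mulr2n in hh; lra.
    lra.
  rewrite mulrCA; apply: ler_pM => //; exact: hK.
have hx : forall i j, `|Dm i j * (a *m Dm) i j + Dm i j * (a *m Dm) i j| <= d%:R * (2 * K) * f.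
  move=> i j; rewrite mxE mulr_sumr.
  apply: le_trans (ler_normD _ _) _.
  have hs : `|\sum_(k < d) Dm i j * (a i k * Dm k j)| <= d%:R * (K * f).
    apply: le_trans (ler_norm_sum _ _ _) _.
    apply: le_trans (ler_sum _ (fun k _ => term i j k)) _.
    by rewrite sumr_const card_ord mulr_natl.
  have -> : d%:R * (2 * K) * f = d%:R * (K * f) + d%:R * (K * f) by ring.
  exact: lerD.
apply: le_trans (ler_norm_sum _ _ _) _.
apply: le_trans (ler_sum _ (fun i _ => ler_norm_sum _ _ _)) _.
apply: le_trans (ler_sum _ (fun i _ => ler_sum _ (fun j _ => hx i j))) _.
rewrite !sumr_const !card_ord -mulrnA -[X in X <= _]mulr_natl natrM.
rewrite le_eqVlt; apply/orP; left; apply/eqP; ring.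
Qed.


Lemma cont_of_derive (R : realType) (f : R -> R) : (forall x, derivable f x 1) -> continuous f.
Proof.
move=> h x; apply: differentiable_continuous; apply/derivable1_diffP; exact: h.
Qed.

Lemma ex_is_derive (R : realType) (k x : R) :
  is_derive x 1 (expR \o (k *: (@id R))) (expR (k * x) * k).
Proof.
have h1 : is_derive x 1 (k *: (@id R)) (k *: (1 : R)).
  by apply: is_deriveZ; exact: is_derive_id.
have h2 : is_derive ((k *: (@id R)) x) 1 expR (expR ((k *: (@id R)) x)).
  exact: is_derive_expR.
have := is_derive1_comp h2 h1.
by rewrite /= /GRing.scale /= mulr1.
Qed.

Lemma gronwall_zero (R : realType) (f df : R -> R) (C s : R) : 0 <= C -> cw f ->
  (forall t : R, 0 <= t <= 1 -> 0 <= f t) ->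
  (forall t : R, 0 < t < 1 -> is_derive t 1 f (df t)) ->
  (forall t : R, 0 < t < 1 -> `|df t| <= C * f t) ->
  0 <= s <= 1 -> f s = 0 -> forall t : R, 0 <= t <= 1 -> f t = 0.
Proof.
move=> C0 cf f0 hd hb hs fs0 t ht.
have key : forall k : R, cw (f * (expR \o (k *: (@id R)))).
  move=> k; apply: cwM => //; apply: cw_glob; apply: cont_of_derive => x.
  by case: (ex_is_derive k x).
have dk : forall k x : R, 0 < x < 1 -> is_derive x 1 (f * (expR \o (k *: (@id R))))
    (f x *: (expR (k * x) * k) + (expR \o (k *: (@id R))) x *: df x).
  move=> k x hx; apply: is_deriveM; [exact: hd|exact: ex_is_derive].
have evk : forall k x : R, (f * (expR \o (k *: (@id R)))) x = f x * expR (k * x).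
  by move=> k x.
have inI : forall x : R, 0 <= x <= 1 -> x \in `[0, 1]%R.
  by move=> x hx; rewrite in_itv.
have hsign : forall k x : R, 0 < x < 1 ->
    (f * (expR \o (k *: (@id R))))^`()%classic x = expR (k * x) * (k * f x + df x).
  move=> k x hx; rewrite derive1E (@derive_val _ _ _ _ _ _ _ (dk k x hx)) /GRing.scale /=.
  ring.
have hder : forall k x : R, x \in `]0, 1[%R -> derivable (f * (expR \o (k *: (@id R)))) x 1.
  by move=> k x; rewrite in_itv /= => hx; case: (dk k _ hx).
have f0' : forall x : R, 0 < x < 1 -> 0 <= f x.
  move=> x /andP[h1 h2]; apply: f0; rewrite !ltW //.
have ft0 : f t <= 0.
  case: (leP s t) => hst.
  - have Hs : forall x : R, x \in `]0, 1[%R -> (f * (expR \o ((- C) *: (@id R))))^`()%classic x <= 0.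
      move=> x; rewrite in_itv /= => hx; rewrite hsign //.
      rewrite pmulr_rle0 ?expR_gt0 //.
      have := hb x hx; have := f0' x hx; rewrite ler_norml => h1 /andP[_ h2].
      lra.
    have := @ler0_derive1_le_cc R _ 0 1 (hder _) Hs (key _) t s (inI _ ht) (inI _ hs) hst.
    by rewrite !evk fs0 mul0r pmulr_lle0 ?expR_gt0.
  - have Hs : forall x : R, x \in `]0, 1[%R -> 0 <= (f * (expR \o (C *: (@id R))))^`()%classic x.
      move=> x; rewrite in_itv /= => hx; rewrite hsign //.
      rewrite pmulr_rge0 ?expR_gt0 //.
      have := hb x hx; have := f0' x hx; rewrite ler_norml => h1 /andP[h2 _].
      lra.
    have := @ger0_derive1_le_cc R _ 0 1 (hder _) Hs (key _) t s (inI _ ht) (inI _ hs) (ltW hst).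
    by rewrite !evk fs0 mul0r pmulr_lle0 ?expR_gt0.
by apply/eqP; rewrite eq_le ft0 f0.
Qed.

Lemma ode_zero (R : realType) d (alpha D : R -> 'M[R]_d) (s : R) :
  mcont alpha -> mcont D ->
  (forall t : R, 0 < t < 1 -> forall i j,
      is_derive t 1 (fun t => D t i j) ((alpha t *m D t) i j)) ->
  0 <= s <= 1 -> D s = 0 -> forall t : R, 0 <= t <= 1 -> D t = 0.
Proof.
move=> ca cD dD hs Ds0.
have [K K0 hK] : exists2 K : R, 0 <= K &
    forall t : R, 0 <= t <= 1 -> forall i k, `|alpha t i k| <= K.
  pose N := fun t => \sum_(i < d) \sum_(k < d) `|alpha t i k|.
  have cN : cw N by apply: cw_sum => i; apply: cw_sum => k; apply: cw_norm.
  have [c c01 hc] := EVT_max ler01 cN.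
  exists (N c); first by apply: sumr_ge0 => i _; apply: sumr_ge0.
  move=> t ht i k; apply: le_trans (hc t _); last by rewrite in_itv.
  apply: (le_trans (@le_sum1 _ _ (fun k => `|alpha t i k|) k _)) => //.
  by apply: (@le_sum1 _ _ (fun i => \sum_(k < d) `|alpha t i k|) i) => i'; apply: sumr_ge0.
pose C : R := d%:R * (d%:R * (d%:R * (2 * K))).
have C0 : 0 <= C by rewrite /C !mulr_ge0.
pose fs := fun t => \sum_(i < d) \sum_(j < d) D t i j * D t i j.
pose e := fun (i j : 'I_d) (t : R) => D t i j.
pose dfs := fun t => \sum_(i < d) \sum_(j < d)
   (D t i j * (alpha t *m D t) i j + D t i j * (alpha t *m D t) i j).
have fE : (\sum_(i < d) \sum_(j < d) (e i j * e i j)) = fs.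
  apply/funext => t; rewrite fct_sumE /fs; apply: eq_bigr => i _.
  by rewrite fct_sumE.
have sq0 : forall x : R, 0 <= x * x by move=> x; rewrite -expr2 sqr_ge0.
have fs0 : forall t, 0 <= fs t.
  by move=> t; apply: sumr_ge0 => i _; apply: sumr_ge0.
have cfs : cw fs.
  by apply: cw_sum => i; apply: cw_sum => j; apply: cwM.
have dfsP : forall t : R, 0 < t < 1 -> is_derive t 1 fs (dfs t).
  move=> t ht; rewrite -fE /dfs.
  apply: is_derive_sum => i; apply: is_derive_sum => j.
  exact: is_deriveM (dD t ht i j) (dD t ht i j).
have fz := @gronwall_zero R fs dfs C s C0 cfs (fun t _ => fs0 t) dfsP.
have bnd : forall t : R, 0 < t < 1 -> `|dfs t| <= C * fs t.
  move=> t /andP[h1 h2]; apply: bound_lemma => //.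
  by apply: hK; rewrite !ltW.
have fss : fs s = 0.
  by rewrite /fs Ds0; apply: big1 => i _; apply: big1 => j _; rewrite mxE mulr0.
move=> t ht; have ft := fz bnd hs fss t ht.
apply/matrixP => i j; rewrite mxE.
have : D t i j * D t i j <= 0.
  rewrite -ft; apply: (le_trans (@le_sum1 _ _ (fun j => D t i j * D t i j) j _)) => //.
  by apply: (@le_sum1 _ _ (fun i => \sum_(j < d) D t i j * D t i j) i) => i'; apply: sumr_ge0.
move=> h; have : D t i j * D t i j = 0 by apply/eqP; rewrite eq_le h sq0.
by move/eqP; rewrite mulf_eq0 orbb => /eqP.
Qed.

Lemma ode_uniq (R : realType) d (alpha X Y : R -> 'M[R]_d) (s : R) :
  mcont alpha -> mcont X -> mcont Y ->
  (forall t : R, 0 < t < 1 -> forall i j,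
      is_derive t 1 (fun t => X t i j) ((alpha t *m X t) i j)) ->
  (forall t : R, 0 < t < 1 -> forall i j,
      is_derive t 1 (fun t => Y t i j) ((alpha t *m Y t) i j)) ->
  0 <= s <= 1 -> X s = Y s -> forall t : R, 0 <= t <= 1 -> X t = Y t.
Proof.
move=> ca cX cY dX dY hs e t ht.
apply/eqP; rewrite -subr_eq0; apply/eqP.
apply: (@ode_zero R d alpha (fun t => X t - Y t) s) => //.
- exact: mcontB.
- move=> u hu i j.
  have -> : (fun t => (X t - Y t) i j) = (fun t => X t i j) - (fun t => Y t i j).
    by apply/funext => v; rewrite !mxE.
  have := is_deriveB (dX u hu i j) (dY u hu i j).
  move=> H; have -> : (alpha u *m (X u - Y u)) i j = (alpha u *m X u) i j - (alpha u *m Y u) i j by rewrite mulmxBr !mxE.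
  exact H.
- by rewrite e subrr.
Qed.

Lemma flow_facts (R : realType) d (alpha : R -> 'M[R]_d) (F : R -> R -> 'M[R]_d) :
  mcont alpha -> is_flow alpha F ->
  forall w : R, 0 <= w <= 1 ->
    F 0 w \in unitmx /\ invmx (F 0 w) = F w 0 /\
    forall t : R, 0 <= t <= 1 -> F w t = F 0 t *m F w 0.
Proof.
move=> ca hF w hw.
have h01 : (0 : R) <= (0 : R) <= (1 : R) by rewrite lexx ler01.
have [F00 [cF0 dF0]] := hF 0 h01.
have [Fww [cFw dFw]] := hF w hw.
have key : forall t : R, 0 <= t <= 1 -> F 0 t = F w t *m F 0 w.
  have cX : mcont (fun t => F 0 t) by move=> i j; exact: (cF0 i j).
  have cY : mcont (fun t => F w t *m F 0 w).
    apply: mcont_mul; last exact: mcont_cst.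
    move=> i j; exact: (cFw i j).
  apply: (@ode_uniq R d alpha (fun t => F 0 t) (fun t => F w t *m F 0 w) w ca cX cY) => //.
  - move=> t ht i j.
    have -> : (fun t => (F w t *m F 0 w) i j) =
        \sum_(k < d) (F 0 w k j *: (fun t => F w t i k)).
      apply/funext => v; rewrite fct_sumE mxE; apply: eq_bigr => k _.
      by rewrite /= /GRing.scale /= mulrC.
    have -> : (alpha t *m (F w t *m F 0 w)) i j =
        \sum_(k < d) (F 0 w k j *: (alpha t *m F w t) i k).
      rewrite mulmxA mxE; apply: eq_bigr => k _.
      by rewrite /GRing.scale /= mulrC.
    apply: is_derive_sum => k; apply: is_deriveZ; exact: dFw.
  - by rewrite Fww mul1mx.
have e1 : F w 0 *m F 0 w = 1%:M by rewrite -key ?F00.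
have [uw u0] := mulmx1_unit e1.
have inv : invmx (F 0 w) = F w 0.
  by rewrite -[RHS]mulmx1 -(mulmxV u0) mulmxA e1 mul1mx.
split => //; split => // t ht.
by rewrite key // -mulmxA -inv mulmxV ?mulmx1.
Qed.

Notation Rint s t f := (Rintegral lebesgue_measure `[s, t] f).

Lemma cw_sub (R : realType) (f : R -> R) (s t : R) : 0 <= s -> t <= 1 -> cw f ->
  {within `[s, t], continuous f}.
Proof.
move=> s0 t1 cf; apply: continuous_subspaceW cf.
by apply: subset_itv; rewrite bnd_simp.
Qed.

Lemma int_ok (R : realType) (f : R -> R) (s t : R) : 0 <= s -> t <= 1 -> cw f ->
  (@lebesgue_measure R).-integrable `[s, t] (EFin \o f).
Proof.
move=> s0 t1 cf; apply: continuous_compact_integrable; first exact: segment_compact.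
exact: cw_sub.
Qed.

Lemma Rint_sum (R : realType) (I : Type) (r : seq I) (f : I -> R -> R) (s t : R) :
  0 <= s -> t <= 1 -> (forall i, cw (f i)) ->
  Rint s t (fun x => \sum_(i <- r) f i x) = \sum_(i <- r) Rint s t (f i).
Proof.
move=> s0 t1 cf; elim: r => [|a r IH].
  under eq_Rintegral do rewrite big_nil.
  by rewrite big_nil Rintegral_cst // mul0r.
under eq_Rintegral do rewrite big_cons.
rewrite big_cons.
rewrite RintegralD //; first by rewrite IH.
- exact: int_ok.
- by apply: int_ok => //; exact: cw_sum.
Qed.

Lemma Rint_scal (R : realType) (f : R -> R) (c s t : R) :
  0 <= s -> t <= 1 -> cw f ->
  Rint s t (fun x => c * f x) = c * Rint s t f.
Proof. by move=> s0 t1 cf; rewrite RintegralZl //; exact: int_ok. Qed.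

Lemma Rint_split (R : realType) (f : R -> R) (l m r : R) :
  0 <= l -> l <= m -> m <= r -> r <= 1 -> cw f ->
  Rint l r f = Rint l m f + Rint m r f.
Proof.
move=> l0 lm mr r1 cf.
have il := int_ok (le_trans l0 lm) r1 cf.
have := @Rintegral_itvB R f (BLeft l) (BRight r) m (int_ok l0 r1 cf).
rewrite !bnd_simp => /(_ lm mr) H.
rewrite -(@Rintegral_itv_obnd_cbnd R m (BRight r) f); last first.
  apply: integrableS il => //; apply: subset_itv; rewrite bnd_simp //.
rewrite -H; ring.
Qed.

Lemma hmat_lin (R : realType) d (Y : R -> 'M[R]_d) (A B : 'M[R]_d) (s t : R) :
  0 <= s -> t <= 1 -> mcont Y ->
  \matrix_(i, j) Rint s t (fun w => (A *m Y w *m B) i j) =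
  A *m (\matrix_(i, j) Rint s t (fun w => Y w i j)) *m B.
Proof.
move=> s0 t1 cY; apply/matrixP => i j; rewrite !mxE.
have -> : Rint s t (fun w => (A *m Y w *m B) i j) =
    Rint s t (fun w => \sum_(l < d) \sum_(k < d) (A i k * B l j) * Y w k l).
  apply: eq_Rintegral => w _; rewrite mxE; apply: eq_bigr => l _.
  by rewrite mxE mulr_suml; apply: eq_bigr => k _; rewrite mulrAC.
rewrite Rint_sum //; last first.
  by move=> l; apply: cw_sum => k; apply: cwM; [exact: cw_cst|exact: cY].
apply: eq_bigr => l _; rewrite Rint_sum //; last first.
  by move=> k; apply: cwM; [exact: cw_cst|exact: cY].
rewrite mxE mulr_suml; apply: eq_bigr => k _.
rewrite Rint_scal //.
by rewrite mxE mulrAC.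
Qed.

Lemma hmat_split (R : realType) d (Y : R -> 'M[R]_d) (l m r : R) :
  0 <= l -> l <= m -> m <= r -> r <= 1 -> mcont Y ->
  \matrix_(i, j) Rint l r (fun w => Y w i j) =
  \matrix_(i, j) Rint l m (fun w => Y w i j) + \matrix_(i, j) Rint m r (fun w => Y w i j).
Proof.
move=> l0 lm mr r1 cY; apply/matrixP => i j; rewrite !mxE.
exact: Rint_split.
Qed.

Lemma invmxM' (R : realType) n (A B : 'M[R]_n) : A \in unitmx -> B \in unitmx ->
  invmx (A *m B) = invmx B *m invmx A.
Proof.
move=> uA uB; have uAB : A *m B \in unitmx by rewrite unitmx_mul uA uB.
have e : A *m B *m (invmx B *m invmx A) = 1%:M by rewrite mulmxA mulmxK // mulmxV.
by rewrite -[LHS]mulmx1 -e mulmxA mulVmx ?mul1mx.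
Qed.

Lemma trig_unit (R : realType) n (s : 'M[R]_n) :
  (forall i j : 'I_n, (i < j)%N -> s i j = 0) -> (forall i, 0 < s i i) -> s \in unitmx.
Proof.
move=> h1 h2; rewrite unitmxE unitfE det_trig; last exact/is_trig_mxP.
by rewrite gt_eqF // prodr_gt0.
Qed.

Lemma part_bounds (R : realType) (rho : R) (l mid r : nat -> nat -> R) :
  l 1%N 0%N = 0 -> r 1%N 0%N = 1 ->
  (forall n k, (1 <= n)%N -> (k < 2 ^ n.-1)%N ->
     (l n k < mid n k /\ mid n k < r n k) /\
     (l n.+1 k.*2 = l n k /\ r n.+1 k.*2 = mid n k) /\
     (l n.+1 k.*2.+1 = mid n k /\ r n.+1 k.*2.+1 = r n k) /\
     (r n k - mid n k < rho * (r n k - l n k) /\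
      mid n k - l n k < rho * (r n k - l n k))) ->
  forall n k, (1 <= n)%N -> (k < 2 ^ n.-1)%N -> 0 <= l n k /\ r n k <= 1.
Proof.
move=> hl hr hp; elim => [//|n IH] k _ hk.
case: n IH hk => [|n] IH hk.
  by move: hk; rewrite expn0 ltnS leqn0 => /eqP ->; rewrite hl hr lexx.
have hk' : (k./2 < 2 ^ n)%N by rewrite ltn_half_double -mul2n -expnS.
have [[lm mr] [[l2 r2] [[l2' r2'] _]]] := hp n.+1 k./2 isT hk'.
have [IHl IHr] := IH k./2 isT hk'.
rewrite -(odd_double_half k); case: (odd k) => /=.
- rewrite add1n l2' r2'; split => //; exact: le_trans (ltW lm).
- rewrite add0n l2 r2; split => //; exact: le_trans (ltW mr) IHr.
Qed.

Unset Implicit Arguments.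

Theorem proposition3 (R : realType) (d m : nat)
  (alpha : R -> 'M[R]_d) (sG : R -> 'M[R]_(d, m)) (F : R -> R -> 'M[R]_d)
  (rho : R) (l mid r : nat -> nat -> R) (sig : nat -> nat -> 'M[R]_d) :
  (0 < d)%N -> (0 < m)%N ->
  (forall i j, {within `[0, 1], continuous (fun t : R => alpha t i j)}) ->
  (forall i j, {within `[0, 1], continuous (fun t : R => sG t i j)}) ->
  is_flow alpha F ->
  (forall u v, 0 <= u -> u < v -> v <= 1 ->
     posdef (F u v *m hmat F sG u u v *m (F u v)^T)) ->
  0 < rho < 1 ->
  l 1%N 0%N = 0 -> r 1%N 0%N = 1 ->
  (forall n k, (1 <= n)%N -> (k < 2 ^ n.-1)%N ->
     (l n k < mid n k /\ mid n k < r n k) /\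
     (l n.+1 k.*2 = l n k /\ r n.+1 k.*2 = mid n k) /\
     (l n.+1 k.*2.+1 = mid n k /\ r n.+1 k.*2.+1 = r n k) /\
     (r n k - mid n k < rho * (r n k - l n k) /\
      mid n k - l n k < rho * (r n k - l n k))) ->
  (forall n k, (1 <= n)%N -> (k < 2 ^ n.-1)%N ->
     is_cholesky
       (hmat F sG (mid n k) (l n k) (mid n k)
        *m invmx (hmat F sG (mid n k) (l n k) (r n k))
        *m hmat F sG (mid n k) (mid n k) (r n k))
       (sig n k)) ->
  forall n k, (1 <= n)%N -> (k < 2 ^ n.-1)%N ->
    let lk := l n k in let mk := mid n k in let rk := r n k in
    let h := hmat F sG 0 in
    let g := fun t => F 0 t in
    let Sig := hmat F sG mk lk mk *m invmx (hmat F sG mk lk rk)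
               *m hmat F sG mk mk rk in
    let L := invmx (h lk mk) *m invmx (g mk) *m sig n k in
    let Rm := invmx (h mk rk) *m invmx (g mk) *m sig n k in
    let M := (g mk)^T *m (invmx (sig n k))^T in
    M = L + Rm /\
    invmx Sig = invmx (hmat F sG mk lk mk) + invmx (hmat F sG mk mk rk).
Proof.
move=> _ _ ca csG hF _ _ hl1 hr1 hpart hchol n k hn hk.
cbv zeta.
have [[lm mr] _] := hpart n k hn hk.
have [l0 r1] := part_bounds hl1 hr1 hpart hn hk.
set lk := l n k; set mk := mid n k; set rk := r n k; set s := sig n k.
have ca' : mcont alpha by move=> i j; exact: (ca i j).
have FF := flow_facts ca' hF.
have in01 : forall x, lk <= x <= rk -> 0 <= x <= 1.
  by move=> x /andP[h1 h2]; rewrite (le_trans l0 h1) (le_trans h2 r1).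
have hm01 : 0 <= mk <= 1 by apply: in01; rewrite !ltW.
have h001 : (0 : R) <= (0 : R) <= (1 : R) by rewrite lexx ler01.
have cF0 : mcont (fun t => F 0 t).
  by have [_ [c _]] := hF 0 h001; move=> i j; exact: (c i j).
have cFu : forall u, 0 <= u <= 1 -> mcont (fun w => F w u).
  move=> u hu i j.
  apply: (@cw_eq R (fun w => (F 0 u *m invmx (F 0 w)) i j)).
    move=> w hw; move: hw; rewrite in_itv /= => hw.
    have [_ [inv key]] := FF w hw.
    by rewrite inv (key u hu).
  have ci : mcont (fun w => invmx (F 0 w)).
    apply: mcont_inv => //.
    by move=> t ht; have [] := FF t ht.
  have := mcont_mul (@mcont_cst _ _ _ (F 0 u)) ci; exact.
pose X u := fun w => F w u *m Gam sG w *m (F w u)^T.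
have cGam : mcont (Gam sG).
  apply: mcont_mul; first by move=> i j; exact: (csG i j).
  by apply: mcont_tr => i j; exact: (csG i j).
have cX : forall u, 0 <= u <= 1 -> mcont (X u).
  move=> u hu; apply: mcont_mul; last exact/mcont_tr/cFu.
  by apply: mcont_mul => //; exact: cFu.
have hE : forall u a b, hmat F sG u a b = \matrix_(i, j) Rint a b (fun w => X u w i j).
  by [].
have hlm := ltW lm; have hmr := ltW mr.
have hm0 : 0 <= mk := le_trans l0 hlm.
have hm1 : mk <= 1 := le_trans hmr r1.
have hsplit : hmat F sG mk lk rk = hmat F sG mk lk mk + hmat F sG mk mk rk.
  by rewrite !hE; apply: hmat_split => //; exact: cX.
have [hlow [hdiag hss]] := hchol n k hn hk.
rewrite -/lk -/mk -/rk -/s in hss.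
set A := hmat F sG mk lk mk in hsplit hss *.
set B := hmat F sG mk mk rk in hsplit hss *.
set C := hmat F sG mk lk rk in hsplit hss *.
have us : s \in unitmx := trig_unit hlow hdiag.
have uSig : A *m invmx C *m B \in unitmx by rewrite -hss unitmx_mul unitmx_tr us.
move: (uSig); rewrite !unitmx_mul => /andP[/andP[uA uiC] uB].
have uAiC : A *m invmx C \in unitmx by rewrite unitmx_mul uA uiC.
have hii : invmx (A *m invmx C *m B) = invmx A + invmx B.
  rewrite invmxM' // invmxM' // invmxK hsplit mulmxDl mulmxV // mulmxDr mulmx1.
  by rewrite mulmxA mulVmx // mul1mx addrC.
split => //.
set G := F 0 mk.
have [uG _] := FF mk hm01.
have hrel : forall a b, lk <= a -> b <= rk ->
    hmat F sG mk a b = G *m hmat F sG 0 a b *m G^T.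
  move=> a b ha hb; rewrite !hE -hmat_lin //; last first.
  - by apply: cX; rewrite lexx ler01.
  - exact: le_trans hb r1.
  - exact: le_trans l0 ha.
  apply/matrixP => i j; rewrite !mxE; apply: eq_Rintegral => w hw.
  have hw01 : 0 <= w <= 1.
    move: hw; rewrite in_setE /= in_itv /= => /andP[h1 h2].
    by rewrite (le_trans l0 (le_trans ha h1)) (le_trans h2 (le_trans hb r1)).
  have [_ [_ key]] := FF w hw01.
  by rewrite /X (key mk hm01) trmx_mul !mulmxA.
have uGT : G^T \in unitmx by rewrite unitmx_tr.
have hinv : forall P, P \in unitmx -> forall Q, P = G *m Q *m G^T ->
    invmx Q = G^T *m invmx P *m G.
  move=> P uP Q eP; rewrite eP in uP *.
  move: (uP); rewrite !unitmx_mul => /andP[/andP[_ uQ] _].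
  have uGQ : G *m Q \in unitmx by rewrite unitmx_mul uG uQ.
  rewrite invmxM' // invmxM' // !mulmxA mulmxV // mul1mx mulmxKV //.
rewrite (hinv A uA (hmat F sG 0 lk mk) (hrel lk mk (lexx _) hmr)).
rewrite (hinv B uB (hmat F sG 0 mk rk) (hrel mk rk hlm (lexx _))).
rewrite !(mulmxK uG) -mulmxDl -mulmxDr -hii -hss invmxM' ?unitmx_tr //.
by rewrite -!mulmxA mulVmx // mulmx1 trmx_inv.
Qed.
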